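(* Let $f(x)=\sum_{i=1}^n f_i(x_i)$ with $f_i(x_i)=a_ix_i^3+b_ix_i^2+c_ix_i+d_i\in\mathbb{Z}[x_i]$ and $a_i\ne0$ for all $i\in[n]$, and suppose all coefficients of $f$ have absolute value at most $H$. Suppose $x^*$ is the unique local minimum of $f$ on $\mathbb{R}^n$ and that $\gamma^*:=f(x^* )$ is rational. Then $x^*$ is rational and its encoding size is bounded by a polynomial in $\log H$ and the encoding size of $\gamma^*$. *)

(* Defs.v *)
From HB Require Import structures.
From mathcomp Require Import all_boot all_order all_algebra.
From mathcomp Require Import all_classical all_reals all_analysis.
Set Implicit Arguments. Unset Strict Implicit. Unset Printing Implicit Defensive.
Import Order.TTheory GRing.Theory Num.Theory.
Import numFieldNormedType.Exports.
Local Open Scope ring_scope.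

Definition sep_cubic (R : realType) (n : nat) (a b c d : 'I_n -> int)
    (x : 'rV[R]_n) : R :=
  \sum_(i < n) ((a i)%:~R * x ord0 i ^+ 3 + (b i)%:~R * x ord0 i ^+ 2
                + (c i)%:~R * x ord0 i + (d i)%:~R).

Definition is_local_min (R : realType) (n : nat) (g : 'rV[R]_n -> R)
    (x : 'rV[R]_n) : Prop :=
  \forall y \near x, g x <= g y.

(* Binary encoding size of an integer: sign bit + number of bits of |z|. *)
Definition enc_size_int (z : int) : nat := 1 + up_log 2 (`|z|%N).+1.

Definition enc_size_rat (q : rat) : nat :=
  enc_size_int (numq q) + enc_size_int (denq q).

(* Main.v *)
Require Import Defs.
From HB Require Import structures.
From mathcomp Require Import all_boot all_order all_algebra.
From mathcomp Require Import all_classical all_reals all_analysis.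
Import Order.TTheory GRing.Theory Num.Theory.
Import numFieldNormedType.Exports.
Local Open Scope ring_scope.
From mathcomp Require Import zify ring lra.
From Stdlib Require Import Classical.
Set Implicit Arguments. Unset Strict Implicit.

Record Kfield (R : realFieldType) (K : R -> Prop) := {
  K1 : K 1;
  KD : forall x y, K x -> K y -> K (x + y);
  KN : forall x, K x -> K (- x);
  KM : forall x y, K x -> K y -> K (x * y);
  KV : forall x, K x -> K x^-1 }.
Arguments Kfield {R}.

Section A.
Variable R : realFieldType.
Implicit Types (K : R -> Prop).

Lemma K0 K : Kfield K -> K 0.
Proof. by case=> H1 HD HN _ _; rewrite -(subrr 1); apply: HD => //; apply: HN. Qed.

Lemma KB K x y : Kfield K -> K x -> K y -> K (x - y).
Proof. by case=> H1 HD HN _ _ *; apply: HD => //; apply: HN. Qed.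

Lemma keyK K x a b : Kfield K -> ~ K x -> K a -> K b -> K (a + b * x) -> b = 0.
Proof.
move=> HK nx Ka Kb Ky; apply/eqP; apply/negP => /negP b0; apply: nx.
have -> : x = ((a + b * x) - a) * b^-1 by field.
by apply: (KM HK); [apply: KB | apply: (KV HK)].
Qed.

Definition Kext K x := fun z => exists a b, K a /\ K b /\ z = a + b * x.

Lemma Kext_field K x : Kfield K -> ~ K x -> K (x ^+ 2) -> Kfield (Kext K x).
Proof.
move=> HK nx Kt; have K0' := K0 HK.
split.
- by exists 1, 0; rewrite mul0r addr0; split; [apply: (K1 HK)|].
- move=> _ _ [a [b [Ka [Kb ->]]]] [a' [b' [Ka' [Kb' ->]]]].
  exists (a + a'), (b + b'); split; [exact: (KD HK)|split; [exact: (KD HK)|ring]].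
- move=> _ [a [b [Ka [Kb ->]]]].
  exists (- a), (- b); split; [exact: (KN HK)|split; [exact: (KN HK)|ring]].
- move=> _ _ [a [b [Ka [Kb ->]]]] [a' [b' [Ka' [Kb' ->]]]].
  exists (a * a' + b * b' * x ^+ 2), (a * b' + a' * b); split.
    by apply: (KD HK); apply: (KM HK) => //; apply: (KM HK).
  split; [by apply: (KD HK); apply: (KM HK)|ring].
- move=> _ [a [b [Ka [Kb ->]]]].
  have [z0|z0] := eqVneq (a + b * x) 0.
    by rewrite z0 invr0; exists 0, 0; rewrite mul0r addr0.
  have N0 : a ^+ 2 - b ^+ 2 * x ^+ 2 != 0.
    apply/negP => /eqP N0.
    have [b0|b0] := eqVneq b 0.
      move: N0; rewrite b0 expr0n /= mul0r subr0 => /eqP; rewrite expf_eq0 /= => /eqP a0.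
      by move: z0; rewrite a0 b0 mul0r addr0 eqxx.
    have : (x - a / b) * (x + a / b) = 0.
      have -> : (x - a / b) * (x + a / b) = - (a ^+ 2 - b ^+ 2 * x ^+ 2) / b ^+ 2 by field.
      by rewrite N0 oppr0 mul0r.
    move/eqP; rewrite mulf_eq0 => /orP [] /eqP H; apply: nx.
      have -> : x = a / b by apply/eqP; rewrite -subr_eq0 H.
      by apply: (KM HK) => //; apply: (KV HK).
    have -> : x = - (a / b) by apply/eqP; rewrite -addr_eq0 H.
    by apply: (KN HK); apply: (KM HK) => //; apply: (KV HK).
  exists (a / (a ^+ 2 - b ^+ 2 * x ^+ 2)), (- b / (a ^+ 2 - b ^+ 2 * x ^+ 2)).
  have KN' : K (a ^+ 2 - b ^+ 2 * x ^+ 2).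
    by apply: KB => //; [apply: (KM HK)|apply: (KM HK) => //; apply: (KM HK)].
  split; first by apply: (KM HK) => //; apply: (KV HK).
  split; first by apply: (KM HK); [apply: (KN HK)|apply: (KV HK)].
  apply: (mulfI z0); rewrite mulfV //; field; by rewrite exprMn.
Qed.

Lemma Kext_sub K x z : Kfield K -> K z -> Kext K x z.
Proof. by move=> HK Kz; exists z, 0; rewrite mul0r addr0; split => //; split => //; apply: K0. Qed.

Lemma Kext_pos K x y : Kfield K -> ~ K x -> 0 <= x -> K (x ^+ 2) ->
  Kext K x y -> 0 <= y -> K (y ^+ 2) ->
  exists a b, K a /\ K b /\ 0 <= b /\ y = a + b * x.
Proof.
move=> HK nx x0 Kt [a [b [Ka [Kb ey]]]] y0 Ky.
have e2 : y ^+ 2 = (a ^+ 2 + b ^+ 2 * x ^+ 2) + (2 * a * b) * x by rewrite ey; ring.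
have Kc : K (a ^+ 2 + b ^+ 2 * x ^+ 2).
  by apply: (KD HK); [apply: (KM HK)|apply: (KM HK) => //; apply: (KM HK)].
have K2 : K 2 by apply: (KD HK); apply: (K1 HK).
have := keyK HK nx Kc (KM HK (KM HK K2 Ka) Kb); rewrite -e2 => /(_ Ky) /eqP.
rewrite mulf_eq0 mulf_eq0 pnatr_eq0 /= => /orP [] /eqP H.
  exists 0, b; split; first exact: K0.
  split => //; rewrite ey H add0r; split => //.
  have xp : 0 < x.
    rewrite lt_neqAle x0 andbT; apply/negP => /eqP x0'; apply: nx; rewrite -x0'; exact: K0.
  by move: y0; rewrite ey H add0r pmulr_lge0.
by exists a, 0; split => //; split; [exact: K0|split => //; rewrite ey H].
Qed.

Lemma Kext_sum K x (l : seq R) : Kfield K -> ~ K x -> 0 <= x -> K (x ^+ 2) ->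
  (forall y, y \in l -> Kext K x y /\ 0 <= y /\ K (y ^+ 2)) ->
  exists A B, K A /\ K B /\ 0 <= B /\ \sum_(y <- l) y = A + B * x.
Proof.
move=> HK nx x0 Kt; elim: l => [|y l IH] H.
  by exists 0, 0; rewrite big_nil mul0r addr0; split; [exact: K0|split; [exact: K0|]].
have [|A [B [KA [KB [B0 eA]]]]] := IH.
  by move=> z zl; apply: H; rewrite in_cons zl orbT.
have [Ey [y0 Ky]] := H y (mem_head _ _).
have [a [b [Ka [Kb [b0 ey]]]]] := Kext_pos HK nx x0 Kt Ey y0 Ky.
exists (a + A), (b + B); rewrite big_cons eA ey.
split; [exact: (KD HK)|split; [exact: (KD HK)|split; [exact: addr_ge0|ring]]].
Qed.

Lemma sqrt_sum_closed (l : seq R) : forall K, Kfield K ->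
  (forall y, y \in l -> 0 <= y /\ K (y ^+ 2)) ->
  K (\sum_(y <- l) y) -> forall y, y \in l -> K y.
Proof.
elim: l => [|x l IH] K HK Hl Hs y; first by rewrite in_nil.
rewrite big_cons in Hs.
have [x0 Kt] := Hl x (mem_head _ _).
have Hl' : forall z, z \in l -> 0 <= z /\ K (z ^+ 2).
  by move=> z zl; apply: Hl; rewrite in_cons zl orbT.
case: (classic (K x)) => Kx.
  have Hs' : K (\sum_(y <- l) y).
    have -> : \sum_(y <- l) y = (x + \sum_(y <- l) y) - x by ring.
    exact: KB.
  move=> /predU1P [-> //| yl]; exact: IH HK Hl' Hs' y yl.
exfalso.
have HK' := Kext_field HK Kx Kt.
have Hl'' : forall z, z \in l -> 0 <= z /\ Kext K x (z ^+ 2).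
  by move=> z zl; have [? ?] := Hl' z zl; split => //; apply: Kext_sub.
have Hs'' : Kext K x (\sum_(y <- l) y).
  exists (x + \sum_(y <- l) y), (-1); split => //; split; [apply: (KN HK); exact: (K1 HK)|ring].
have := Kext_sum HK Kx x0 Kt (l := l).
case.
  by move=> z zl; have [? ?] := Hl' z zl; split => //; exact: IH HK' Hl'' Hs'' z zl.
move=> A [B [KA' [KB' [B0 eA]]]].
have := keyK (b := B + 1) (a := A - (x + \sum_(y <- l) y)) HK Kx.
move=> /(_ (KB HK KA' Hs) (KD HK KB' (K1 HK))).
have -> : A - (x + \sum_(y <- l) y) + (B + 1) * x = 0 by rewrite eA; ring.
move=> /(_ (K0 HK)) /eqP; rewrite paddr_eq0 ?oner_eq0 ?andbF //.
Qed.
End A.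
Section C.
Variable R : realFieldType.

Lemma small_le0 (p M e : R) : 0 < e -> 0 <= M ->
  (forall eps, 0 < eps -> eps < e -> p * eps <= eps * (eps * M)) -> p <= 0.
Proof.
move=> e0 M0 H; rewrite leNgt; apply/negP => p0.
have M1 : 0 < M + 1 by lra.
pose eps := Num.min (e / 2) (p / (M + 1)).
have q0 : 0 < p / (M + 1) by apply: divr_gt0.
have eps0 : 0 < eps by rewrite lt_min; apply/andP; split => //; lra.
have h1 : eps <= e / 2 by rewrite /eps ge_min lexx.
have h2 : eps <= p / (M + 1) by rewrite /eps ge_min lexx orbT.
have epse : eps < e by lra.
have := H eps eps0 epse; rewrite (mulrC p) ler_pM2l //.
have : eps * M <= p / (M + 1) * M by apply: ler_wpM2r.
have : p / (M + 1) * M < p.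
  have -> : p / (M + 1) * M = p - p / (M + 1) by field; lra.
  lra.
lra.
Qed.
End C.
Section C2.
Variable R : realFieldType.
Lemma bnd_aux (B c eps : R) : 0 < eps -> eps <= 1 -> B + c * eps <= `|B| + `|c|.
Proof.
move=> e0 e1; have hB := ler_norm B; have hc := ler_norm c.
have : c * eps <= `|c| * eps by apply: ler_wpM2r; lra.
have : `|c| * eps <= `|c| by rewrite ler_piMr.
lra.
Qed.

Lemma crit (p B a e : R) : 0 < e ->
  (forall h, `|h| < e -> 0 <= p * h + B * h ^+ 2 + a * h ^+ 3) -> p = 0 /\ 0 <= B.
Proof.
move=> e0 H.
pose e1 := Num.min e 1.
have e10 : 0 < e1 by rewrite lt_min e0 ltr01.
have e1e : e1 <= e by rewrite /e1 ge_min lexx.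
have e11 : e1 <= 1 by rewrite /e1 ge_min lexx orbT.
have Hpm : forall eps, 0 < eps -> eps < e1 ->
   0 <= p * eps + B * eps ^+ 2 + a * eps ^+ 3 /\ 0 <= - p * eps + B * eps ^+ 2 - a * eps ^+ 3.
  move=> eps ep epe; split.
    by apply: H; rewrite gtr0_norm //; lra.
  have := H (- eps); rewrite normrN gtr0_norm // => /(_ ltac:(lra)).
  have -> : p * - eps + B * (- eps) ^+ 2 + a * (- eps) ^+ 3 = - p * eps + B * eps ^+ 2 - a * eps ^+ 3 by ring.
  done.
have M0 : 0 <= `|B| + `|a| by apply: addr_ge0.
split.
  apply/eqP; rewrite eq_le; apply/andP; split.
    apply: (small_le0 e10 M0) => eps ep epe.
    have [_ h2] := Hpm eps ep epe.
    have := bnd_aux B (- a) ep (ltW (lt_le_trans epe e11)); rewrite normrN => hb.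
    have : eps * (eps * (B + - a * eps)) <= eps * (eps * (`|B| + `|a|)).
      by apply: ler_wpM2l; [lra|apply: ler_wpM2l; lra].
    have -> : eps * (eps * (B + - a * eps)) = B * eps ^+ 2 - a * eps ^+ 3 by ring.
    lra.
  rewrite -oppr_le0; apply: (small_le0 e10 M0) => eps ep epe.
  have [h1 _] := Hpm eps ep epe.
  have hb := bnd_aux B a ep (ltW (lt_le_trans epe e11)).
  have : eps * (eps * (B + a * eps)) <= eps * (eps * (`|B| + `|a|)).
    by apply: ler_wpM2l; [lra|apply: ler_wpM2l; lra].
  have -> : eps * (eps * (B + a * eps)) = B * eps ^+ 2 + a * eps ^+ 3 by ring.
  lra.
have [h1 h2] := Hpm (e1 / 2) ltac:(lra) ltac:(lra).
have : 0 <= B * (e1 / 2) ^+ 2 by lra.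
by rewrite pmulr_lge0 // exprn_gt0 //; lra.
Qed.
End C2.
Definition cub (R : realType) (a b c d : int) (t : R) : R :=
  a%:~R * t ^+ 3 + b%:~R * t ^+ 2 + c%:~R * t + d%:~R.

Lemma locmin_coord (R : realType) (n : nat) (a b c d : 'I_n -> int) (xs : 'rV[R]_n) (i : 'I_n) :
  is_local_min (sep_cubic a b c d) xs ->
  exists e : R, 0 < e /\ forall h : R, `|h| < e ->
    cub (a i) (b i) (c i) (d i) (xs ord0 i) <= cub (a i) (b i) (c i) (d i) (xs ord0 i + h).
Proof.
move=> /nbhs_ballP [e e0 He]; exists e; split => // h he.
pose y : 'rV[R]_n := \row_j (if j == i then xs ord0 i + h else xs ord0 j).
have By : ball xs e y.
  split => // i' j; rewrite ord1 !mxE.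
  case: eqP => [->|_]; last exact: ballxx.
  by rewrite /ball /= opprD addrA subrr add0r normrN.
have := He y By; rewrite /sep_cubic (bigD1 i) //= [X in _ <= X](bigD1 i) //=.
have -> : \sum_(i0 < n | i0 != i)
    ((a i0)%:~R * y ord0 i0 ^+ 3 + (b i0)%:~R * y ord0 i0 ^+ 2 +
     (c i0)%:~R * y ord0 i0 + (d i0)%:~R) =
  \sum_(i0 < n | i0 != i)
    ((a i0)%:~R * xs ord0 i0 ^+ 3 + (b i0)%:~R * xs ord0 i0 ^+ 2 +
     (c i0)%:~R * xs ord0 i0 + (d i0)%:~R).
  by apply: eq_bigr => j /negPf ji; rewrite !mxE ji.
rewrite !mxE eqxx /cub; lra.
Qed.
Lemma rat_sq_int (q : rat) (D : int) : q ^+ 2 = D%:~R -> q = (numq q)%:~R.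
Proof.
case: ratP => n d cnd H.
have E : n ^+ 2 = D * (d.+1)%:Z ^+ 2.
  apply: (@intr_inj rat); rewrite !rmorphXn rmorphM /= -H.
  field; apply: lt0r_neq0; have := ler0n rat d; lra.
have E' : (`|n| ^ 2 = `|D| * d.+1 ^ 2)%N by rewrite -abszX E abszM abszX.
have dv : (d.+1 %| `|n| ^ 2)%N by rewrite E' dvdn_mull // dvdn_exp.
have := coprime_dvdl dv (coprimeXl 2 cnd).
rewrite /coprime gcdnn => /eqP ->.
by rewrite divr1.
Qed.

Lemma numden_bound (m k : int) : k != 0 ->
  `|numq (m%:~R / k%:~R : rat)| <= `|m| /\ denq (m%:~R / k%:~R : rat) <= `|k|.
Proof.
move=> kn0; move: (divqP m k) kn0 => [_|k0 x kn0 _]; first by rewrite eqxx.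
rewrite !normrM (gtr0_norm (denq_gt0 x)).
have : 1 <= `|k0| by move: kn0; lia.
have := denq_gt0 x; have := normr_ge0 (numq x); nia.
Qed.

Lemma enc_bound (z : int) (H : nat) : `|z| <= (3 * H)%N%:Z ->
  (enc_size_int z <= 3 + up_log 2 H.+1)%N.
Proof.
move=> hz; rewrite /enc_size_int.
have hL := up_logP H.+1 (isT : (1 < 2)%N).
have h1 : ((`|z|%N).+1 <= 2 ^ (2 + up_log 2 H.+1))%N.
  rewrite expnD; move: hL; set X := (2 ^ up_log 2 H.+1)%N; move: hz; lia.
have := up_log_min (isT : (1 < 2)%N) h1; lia.
Qed.

Lemma coord_crit (R : realType) (n : nat) (a b c d : 'I_n -> int) (xs : 'rV[R]_n) (i : 'I_n) :
  is_local_min (sep_cubic a b c d) xs ->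
  3 * (a i)%:~R * xs ord0 i ^+ 2 + 2 * (b i)%:~R * xs ord0 i + (c i)%:~R = 0 :> R /\
  0 <= 3 * (a i)%:~R * xs ord0 i + (b i)%:~R :> R.
Proof.
move=> /(locmin_coord i) [e [e0 He]].
apply: (crit (a := (a i)%:~R) e0) => h /He; rewrite /cub.
set x := xs ord0 i; rewrite -subr_ge0.
set L := (X in 0 <= X -> _); set M := (X in _ -> 0 <= X).
suff -> : L = M by [].
rewrite /L /M; ring.
Qed.

Section KQ.
Variable R : realType.
Definition KQ : R -> Prop := fun z => exists q : rat, z = ratr q.

Lemma KQ_field : Kfield KQ.
Proof.
split.
- by exists 1; rewrite rmorph1.
- by move=> _ _ [q ->] [q' ->]; exists (q + q'); rewrite rmorphD.
- by move=> _ [q ->]; exists (- q); rewrite rmorphN.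
- by move=> _ _ [q ->] [q' ->]; exists (q * q'); rewrite rmorphM.
- by move=> _ [q ->]; exists (q^-1); rewrite fmorphV.
Qed.

Lemma KQint (z : int) : KQ z%:~R.
Proof. by exists z%:~R; rewrite ratr_int. Qed.

Lemma KQnat (k : nat) : KQ k%:R.
Proof. by exists k%:R; rewrite ratr_nat. Qed.

Lemma KQX x k : KQ x -> KQ (x ^+ k).
Proof. by move=> [q ->]; exists (q ^+ k); rewrite rmorphXn. Qed.

Lemma KQsum n (F : 'I_n -> R) : (forall i, KQ (F i)) -> KQ (\sum_i F i).
Proof.
move=> HF; elim/big_ind: _ => //; first by exists 0; rewrite rmorph0.
by move=> x y; apply: (KD KQ_field).
Qed.
End KQ.

Ltac kclose := repeat first
  [ apply: KQnat | apply: KQint | apply: KQX | apply: (KD (KQ_field _))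
  | apply: (KM (KQ_field _)) | apply: (KN (KQ_field _)) | apply: (KV (KQ_field _)) ].

Theorem theorem5 :
  exists C k : nat,
  forall (R : realType) (n : nat) (a b c d : 'I_n -> int) (H : nat)
         (xs : 'rV[R]_n) (gamma : rat),
    (forall i, a i != 0) ->
    (forall i, `|a i| <= H%:Z /\ `|b i| <= H%:Z /\ `|c i| <= H%:Z) ->
    `|\sum_(i < n) d i| <= H%:Z ->
    is_local_min (sep_cubic a b c d) xs ->
    (forall y, is_local_min (sep_cubic a b c d) y -> y = xs) ->
    sep_cubic a b c d xs = ratr gamma ->
    exists xq : 'rV[rat]_n,
      xs = map_mx ratr xq /\
      forall i : 'I_n,
        (enc_size_rat (xq ord0 i) <= C * (1 + up_log 2 H.+1 + enc_size_rat gamma) ^ k)%N.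
Proof.
exists 6%N, 1%N => R n a b c d H xs gamma a0 hH _ lm _ hg.
have A0 : forall i, (a i)%:~R != 0 :> R by move=> i; rewrite intr_eq0.
pose s i : R := 3 * (a i)%:~R * xs ord0 i + (b i)%:~R.
pose Dz i : int := b i ^+ 2 - 3 * a i * c i.
pose w i : R := 2 * s i ^+ 3 / (27 * (a i)%:~R ^+ 2).
pose E i : R := (2 * (b i)%:~R ^+ 3 - 9 * (a i)%:~R * (b i)%:~R * (c i)%:~R) / (27 * (a i)%:~R ^+ 2).
have s0 : forall i, 0 <= s i by move=> i; case: (coord_crit i lm).
have s2 : forall i, s i ^+ 2 = (Dz i)%:~R.
  move=> i; have [p0 _] := coord_crit i lm.
  have -> : s i ^+ 2 = (Dz i)%:~R + 3 * (a i)%:~R *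
     (3 * (a i)%:~R * xs ord0 i ^+ 2 + 2 * (b i)%:~R * xs ord0 i + (c i)%:~R).
    by rewrite /s /Dz; ring.
  by rewrite p0 mulr0 addr0.
have val : forall i, (a i)%:~R * xs ord0 i ^+ 3 + (b i)%:~R * xs ord0 i ^+ 2
   + (c i)%:~R * xs ord0 i + (d i)%:~R = (d i)%:~R + E i - w i.
  move=> i; have [p0 _] := coord_crit i lm.
  have eC : (c i)%:~R = - (3 * (a i)%:~R * xs ord0 i ^+ 2 + 2 * (b i)%:~R * xs ord0 i) :> R.
    by apply/eqP; rewrite -subr_eq0 opprK addrC; apply/eqP.
  rewrite /E /w /s eC; field; rewrite ?mulf_neq0 ?expf_neq0 //.
have hsum : \sum_i w i = \sum_i ((d i)%:~R + E i) - ratr gamma.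
  have : \sum_i ((d i)%:~R + E i - w i) = ratr gamma.
    by rewrite -hg /sep_cubic; apply: eq_bigr => i _; rewrite val.
  rewrite sumrB => <-; ring.
have Kw : forall i, KQ (w i).
  move=> i.
  have := @sqrt_sum_closed R [seq w i | i <- enum 'I_n] (@KQ R) (KQ_field R).
  apply.
  - move=> _ /mapP [j _ ->]; split.
      rewrite /w; apply: mulr_ge0; first by apply: mulr_ge0 => //; apply: exprn_ge0.
      by rewrite invr_ge0; apply: mulr_ge0 => //; apply: sqr_ge0.
    have -> : w j ^+ 2 = 4 * (s j ^+ 2) ^+ 3 / (27 * (a j)%:~R ^+ 2) ^+ 2.
      by rewrite /w; field; rewrite ?mulf_neq0 ?expf_neq0.
    rewrite s2; kclose.
  - rewrite big_map big_enum /= hsum; apply: (KB (KQ_field R)).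
      by apply: KQsum => j; rewrite /E; kclose.
    by exists gamma.
  - by rewrite map_f // mem_enum.
have Ks : forall i, exists q : rat, s i = ratr q.
  move=> i; have [D0|D0] := eqVneq (Dz i) 0.
    exists 0; rewrite rmorph0; apply/eqP; rewrite -sqrf_eq0.
    by rewrite s2 D0.
  have -> : s i = w i * (27 * (a i)%:~R ^+ 2) / (2 * (Dz i)%:~R).
    rewrite /w -s2 exprSr.
    have sn0 : s i != 0.
      apply: contra_neq D0 => s00; apply: (@intr_inj R); rewrite -s2 s00.
      by rewrite expr0n.
    by field; rewrite sn0 A0.
  suff HH : KQ (w i * (27 * (a i)%:~R ^+ 2) / (2 * (Dz i)%:~R)) by exact: HH.
  apply: (KM (KQ_field R)); [apply: (KM (KQ_field R)); [exact: Kw|kclose]|kclose].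
have [sig Hsig] := fin_all_exists Ks.
have sig2 : forall i, sig i ^+ 2 = (Dz i)%:~R.
  move=> i; apply: (fmorph_inj (@ratr R)).
  by rewrite rmorphXn /= -Hsig s2 ratr_int.
pose m i := numq (sig i).
have em : forall i, s i = (m i)%:~R.
  by move=> i; rewrite Hsig (rat_sq_int (sig2 i)) ratr_int.
have m2 : forall i, m i ^+ 2 = Dz i.
  move=> i; apply: (@intr_inj rat); rewrite rmorphXn /= -(rat_sq_int (sig2 i)).
  exact: sig2.
exists (\row_i (((m i - b i)%:~R / (3 * a i)%:~R) : rat)).
split.
  apply/rowP => j; rewrite !mxE fmorph_div !rmorph_int.
  rewrite !(rmorphB, rmorphM) /= -em /s.
  have -> : (3 : int)%:~R = 3 :> R by [].
  by field; rewrite A0.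
move=> i; rewrite mxE /enc_size_rat.
have a3 : 3 * a i != 0 by rewrite mulf_neq0.
have [hn hd] := numden_bound (m i - b i) a3.
have [ha [hb hc]] := hH i.
have hm := m2 i.
have b1 : `|m i - b i| <= (3 * H)%N%:Z by rewrite /Dz in hm; nia.
have b2 : `|3 * a i| <= (3 * H)%N%:Z by nia.
have e1 := enc_bound (le_trans hn b1).
have e2 : `|denq ((m i - b i)%:~R / (3 * a i)%:~R : rat)| <= (3 * H)%N%:Z.
  by rewrite gtr0_norm ?denq_gt0 //; apply: le_trans hd b2.
have e3 := enc_bound e2.
rewrite /enc_size_int in e1 e3 *.
rewrite expn1; lia.
Qed.
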